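(* Let $S\subset\Pi$. The assignments $s_{\alpha_i}(\eta,o)=(s_{\alpha_i}\eta,\ \eta(\alpha_i)^{r_i}o)$ for $\alpha_i\in S$ extend to a well-defined action of the group $W_S$ on the set $\mathbb D(S)\times\{\pm1\}$.
   Context: $\mathfrak g$ is a real split semisimple Lie algebra with simple roots $\Pi=\{\alpha_1,\dots,\alpha_l\}$, coroots $h_{\alpha_j}$, Cartan matrix $C_{i,j}=\alpha_i(h_{\alpha_j})$, Weyl group $W$. For $S\subset\Pi$, $W_S\subset W$ is the subgroup generated by the simple reflections $s_\alpha$, $\alpha\in S$; $\mathbb D(S)$ is the set of functions $\eta:S\to\{\pm1\}$ (colored Dynkin diagrams with colored set $S$). For $\alpha_i\in S$, $s_{\alpha_i}\eta\in\mathbb D(S)$ is defined by $(s_{\alpha_i}\eta)(\alpha_j)=\eta(\alpha_j)\eta(\alpha_i)^{-C_{j,i}}$ for $\alpha_j\in S$, and $r_i$ is the number of $\alpha_j\in\Pi\setminus S$ with $C_{j,i}$ odd. *)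

(* Defs.v *)
From HB Require Import structures.
From mathcomp Require Import all_boot all_order all_algebra.
Set Implicit Arguments. Unset Strict Implicit. Unset Printing Implicit Defensive.
Import Order.TTheory GRing.Theory Num.Theory.
Local Open Scope ring_scope.

(* C : 'M[int]_l is the Cartan matrix, C i j = alpha_i (h_{alpha_j}). *)

Definition finite_type_cartan (l : nat) (C : 'M[int]_l) : Prop :=
  [/\ (forall i, C i i = 2),
      (forall i j, i != j -> C i j <= 0),
      (forall i j, (C i j == 0) = (C j i == 0)) &
      exists d : 'I_l -> rat,
        [/\ (forall i, 0 < d i),
            (forall i j, d i * (C i j)%:~R = d j * (C j i)%:~R) &
            (forall v : 'I_l -> rat, (exists i, v i != 0) ->
               0 < \sum_(i < l) \sum_(j < l) v i * d i * (C i j)%:~R * v j)]].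

(* Simple reflection s_i acting on the root lattice Z^l (coordinates w.r.t.
   the simple roots, column convention): s_i(alpha_j) = alpha_j - C j i alpha_i.
   This is a faithful representation of the Weyl group W. *)
Definition refl (l : nat) (C : 'M[int]_l) (i : 'I_l) : 'M[int]_l :=
  \matrix_(k, j) ((k == j)%:R - (k == i)%:R * C j i).

Definition in_WS (l : nat) (C : 'M[int]_l) (S : {set 'I_l}) (g : 'M[int]_l) : Prop :=
  exists s : seq 'I_l, all (fun i => i \in S) s /\
    g = foldr (fun i M => refl C i *m M) 1%:M s.

(* A colored Dynkin diagram eta : S -> {+1,-1} is encoded as a function
   'I_l -> int with values in {1,-1} on S and equal to 1 off S. *)
Definition is_sign (x : int) : bool := (x == 1) || (x == -1).

Definition in_DS (l : nat) (S : {set 'I_l}) (eta : {ffun 'I_l -> int}) : bool :=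
  [forall i, if i \in S then is_sign (eta i) else eta i == 1].

Definition in_DSxpm (l : nat) (S : {set 'I_l}) (x : {ffun 'I_l -> int} * int) : bool :=
  in_DS S x.1 && is_sign x.2.

Definition r_ (l : nat) (C : 'M[int]_l) (S : {set 'I_l}) (i : 'I_l) : nat :=
  #|[set j : 'I_l | (j \notin S) && odd (absz (C j i))]|.

Definition s_eta (l : nat) (C : 'M[int]_l) (S : {set 'I_l}) (i : 'I_l)
  (eta : {ffun 'I_l -> int}) : {ffun 'I_l -> int} :=
  [ffun j => if j \in S then eta j * (eta i) ^ (- C j i) else eta j].

Definition s_act (l : nat) (C : 'M[int]_l) (S : {set 'I_l}) (i : 'I_l)
  (x : {ffun 'I_l -> int} * int) : {ffun 'I_l -> int} * int :=
  (s_eta C S i x.1, (x.1 i) ^+ (r_ C S i) * x.2).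

(* Main.v *)
Require Import Defs.
From mathcomp Require Import all_boot all_order all_algebra.
Import GRing.Theory Num.Theory.
Local Open Scope ring_scope.
Set Implicit Arguments. Unset Strict Implicit.

Section Aux.
Variable l : nat.
Implicit Types (C : 'M[int]_l) (S : {set 'I_l}).

Lemma sum_delta_l (k : 'I_l) (F : 'I_l -> int) :
  \sum_m (k == m)%:R * F m = F k.
Proof.
rewrite (bigD1 k) //= eqxx mul1r big1 ?addr0 // => m /negPf.
by rewrite eq_sym => ->; rewrite mul0r.
Qed.

Lemma sum_delta_r (k : 'I_l) (F : 'I_l -> int) :
  \sum_m F m * (m == k)%:R = F k.
Proof.
rewrite (bigD1 k) //= eqxx mulr1 big1 ?addr0 // => m /negPf ->.
by rewrite mulr0.
Qed.

Lemma refl_mul C i (M : 'M[int]_l) k j :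
  (refl C i *m M) k j = M k j - (k == i)%:R * \sum_m C m i * M m j.
Proof.
rewrite !mxE.
under eq_bigr => m _ do rewrite mxE mulrBl.
rewrite sumrB sum_delta_l; congr (_ - _).
rewrite mulr_sumr; apply: eq_bigr => m _; by rewrite mulrA.
Qed.

Lemma refl_invol C i : finite_type_cartan C -> refl C i *m refl C i = 1%:M.
Proof.
case=> Cii _ _ _; apply/matrixP => k j.
rewrite refl_mul.
under eq_bigr => m _ do rewrite mxE mulrBr.
rewrite sumrB sum_delta_r.
under eq_bigr => m _ do rewrite mulrA.
rewrite -mulr_suml sum_delta_r Cii !mxE.
have -> : C j i - 2 * C j i = - C j i.
  by rewrite mulrDl mul1r opprD addrA subrr sub0r.
by rewrite mulrN opprK subrK.
Qed.

Definition offS_id S (g : 'M[int]_l) := forall k j, k \notin S -> g k j = (k == j)%:R.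

Lemma WS_props C S g : finite_type_cartan C -> in_WS C S g ->
  g \in unitmx /\ offS_id S g.
Proof.
move=> fC [s [hs ->]]; elim: s hs => [|i s IH] /=.
  by move=> _; split; [exact: unitmx1 | move=> k j _; rewrite mxE].
case/andP=> iS /IH [u o]; split.
  rewrite unitmx_mul u andbT.
  by case: (mulmx1_unit (refl_invol i fC)).
move=> k j kS; rewrite refl_mul o //.
have -> : (k == i) = false by apply/negP => /eqP ki; move: kS; rewrite ki iS.
by rewrite mul0r subr0.
Qed.

Lemma offS_inv S g : g \in unitmx -> offS_id S g -> offS_id S (invmx g).
Proof.
move=> u o k j kS.
have <- : (g *m invmx g) k j = (k == j)%:R by rewrite mulmxV // mxE.
rewrite mxE; under eq_bigr => m _ do rewrite o //.
by rewrite sum_delta_l.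
Qed.

Lemma invmx_mul (A B : 'M[int]_l) : A \in unitmx -> B \in unitmx ->
  invmx (A *m B) = invmx B *m invmx A.
Proof.
move=> uA uB.
have uAB : A *m B \in unitmx by rewrite unitmx_mul uA.
have e : (A *m B) *m (invmx B *m invmx A) = 1%:M.
  by rewrite -mulmxA (mulmxA B) mulmxV // mul1mx mulmxV.
by rewrite -[RHS]mul1mx -(mulVmx uAB) -mulmxA e mulmx1.
Qed.

Lemma invmx_refl C i : finite_type_cartan C -> invmx (refl C i) = refl C i.
Proof.
move=> fC; have e := refl_invol i fC.
have [u _] := mulmx1_unit e.
by rewrite -[RHS]mul1mx -(mulVmx u) -mulmxA e mulmx1.
Qed.

Lemma prodXz (I : finType) (P : pred I) (F : I -> int) (n : int) :
  (forall i, P i -> F i \is a GRing.unit) ->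
  (\prod_(i | P i) F i) ^ n = \prod_(i | P i) F i ^ n.
Proof.
move=> uF.
pose K (y z : int) := y \is a GRing.unit /\ y ^ n = z.
suff [] : K (\prod_(i | P i) F i) (\prod_(i | P i) F i ^ n) by [].
apply: (big_rec2 K); first by split; [exact: unitr1 | exact: exp1rz].
move=> i y z Pi [uy <-]; split; first by rewrite unitrM uF.
by rewrite exprzMl // uF.
Qed.

Lemma prodz_sum (I : finType) (P : pred I) (x : int) (f : I -> int) :
  x \is a GRing.unit ->
  \prod_(i | P i) x ^ f i = x ^ (\sum_(i | P i) f i).
Proof.
move=> ux.
apply: (big_rec2 (fun y z => y = x ^ z)) => // i y z _ ->.
by rewrite exprzDr.
Qed.

Lemma sign_pow (e n : int) : is_sign e -> e ^ n = e ^+ (odd `|n|)%N.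
Proof.
case/orP=> /eqP ->; first by rewrite exp1rz expr1n.
case: n => m /=; first by rewrite signr_odd.
change (((-1) ^+ m.+1)^-1 = (-1) ^+ odd m.+1 :> int).
rewrite -[(-1) ^+ m.+1]signr_odd /=; case: (odd m) => /=; rewrite ?expr1 ?expr0 ?invrN1 ?invr1 //.
Qed.

Definition psi S (G : 'M[int]_l) (eta : {ffun 'I_l -> int}) (j : 'I_l) : int :=
  \prod_(k in S) eta k ^ (G k j).

Lemma prod_delta S (eta : {ffun 'I_l -> int}) j (c : int) :
  \prod_(k in S) eta k ^ ((k == j)%:R * c) = if j \in S then eta j ^ c else 1.
Proof.
case: ifP => jS.
  rewrite (bigD1 j) //= eqxx mul1r big1 ?mulr1 // => k /andP [_ /negPf ->].
  by rewrite mul0r.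
rewrite big1 // => k kS; have -> : (k == j) = false.
  by apply/negP => /eqP e; move: jS; rewrite -e kS.
by rewrite mul0r.
Qed.

Lemma psi_unit S (G : 'M[int]_l) (eta : {ffun 'I_l -> int}) (j : 'I_l) : (forall k, k \in S -> eta k \is a GRing.unit) ->
  psi S G eta j \is a GRing.unit.
Proof. by move=> u; apply: unitr_prod => k kS; apply: unitrXz; apply: u. Qed.

Lemma psi_mul S (A B : 'M[int]_l) (eta : {ffun 'I_l -> int}) j :
  (forall k, k \in S -> eta k \is a GRing.unit) -> offS_id S B ->
  psi S (A *m B) eta j =
  psi S B [ffun k => if k \in S then psi S A eta k else 1] j *
  (if j \in S then 1 else psi S A eta j).
Proof.
move=> u o.
have -> : psi S B [ffun k => if k \in S then psi S A eta k else 1] j =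
    \prod_(m in S) eta m ^ (\sum_(k in S) A m k * B k j).
  rewrite /psi; transitivity (\prod_(k in S) \prod_(m in S) eta m ^ (A m k * B k j)).
    apply: eq_bigr => k kS; rewrite ffunE kS prodXz; last first.
      by move=> m mS; apply: unitrXz; apply: u.
    by apply: eq_bigr => m _; exact: exprz_exp.
  rewrite exchange_big; apply: eq_bigr => m mS; exact: prodz_sum (u m mS).
rewrite /psi.
have split_sum : forall m, (A *m B) m j = \sum_(k in S) A m k * B k j +
    (if j \in S then 0 else A m j).
  move=> m; rewrite mxE (bigID (fun k => k \in S)) /=; congr (_ + _).
  under eq_bigr => k kS do rewrite o //.
  case: ifP => jS.
    rewrite big1 // => k kS; have -> : (k == j) = false.
      by apply/negP => /eqP e; move: kS; rewrite e jS.
    by rewrite mulr0.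
  by rewrite (bigD1 j) ?jS //= eqxx mulr1 big1 ?addr0 // => k /andP [_ /negPf ->]; rewrite mulr0.
under eq_bigr => m mS do rewrite split_sum exprzDr ?u //.
rewrite big_split /=; congr (_ * _).
case: ifP => jS //; rewrite big1 // => m _; exact: expr0z.
Qed.

End Aux.

Definition act (l : nat) (S : {set 'I_l}) (g : 'M[int]_l) (x : {ffun 'I_l -> int} * int) :
  {ffun 'I_l -> int} * int :=
  ([ffun j => if j \in S then psi S (invmx g) x.1 j else 1],
   (\prod_(j | j \notin S) psi S (invmx g) x.1 j) * x.2).

Lemma DS_unit (l : nat) (S : {set 'I_l}) eta : in_DS S eta ->
  forall k, k \in S -> eta k \is a GRing.unit.
Proof. by move=> /forallP h k kS; move: (h k); rewrite kS. Qed.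

Lemma DS_off (l : nat) (S : {set 'I_l}) eta : in_DS S eta ->
  forall k, k \notin S -> eta k = 1.
Proof. by move=> /forallP h k kS; move: (h k); rewrite (negPf kS) => /eqP. Qed.

Theorem proposition4p1p2 (l : nat) (C : 'M[int]_l) (S : {set 'I_l}) :
  finite_type_cartan C ->
  exists act : 'M[int]_l -> {ffun 'I_l -> int} * int -> {ffun 'I_l -> int} * int,
    [/\ (forall g x, in_WS C S g -> in_DSxpm S x -> in_DSxpm S (act g x)),
        (forall i x, i \in S -> in_DSxpm S x -> act (refl C i) x = s_act C S i x),
        (forall x, in_DSxpm S x -> act 1%:M x = x) &
        (forall g h x, in_WS C S g -> in_WS C S h -> in_DSxpm S x ->
           act (g *m h) x = act g (act h x))].
Proof.
move=> fC; exists (act S); split.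
- move=> g [eta o] _ /andP [/= hD ho]; apply/andP; split => /=.
    apply/forallP => j; rewrite ffunE; case: ifP => jS; rewrite jS //.
    exact: (psi_unit _ _ (DS_unit hD)).
  change ((\prod_(j | j \notin S) psi S (invmx g) eta j) * o \is a GRing.unit).
  by rewrite unitrM (ho : o \is a GRing.unit) andbT; apply: unitr_prod => j _; apply: psi_unit; apply: DS_unit.
- move=> i [eta o] iS /andP [/= hD ho]; rewrite /act /s_act /= invmx_refl //.
  have ep : forall j, psi S (refl C i) eta j =
      (if j \in S then eta j else 1) * eta i ^ (- C j i).
    move=> j; rewrite /psi.
    under eq_bigr => k kS do rewrite mxE exprzDr ?(DS_unit hD) // -[X in eta k ^ X]mulr1 -mulrN.
    rewrite big_split /= !prod_delta iS; case: ifP => //.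
  congr (_, _).
    apply/ffunP => j; rewrite !ffunE ep; case: ifP => jS; rewrite ?jS //.
    by rewrite (DS_off hD) ?jS.
  congr (_ * _).
  have si : is_sign (eta i) by move: (forallP hD i); rewrite iS.
  rewrite (eq_bigr (fun j => eta i ^+ (odd `|C j i|)%N)); last first.
    by move=> j jS; rewrite ep (negPf jS) mul1r sign_pow // abszN.
  rewrite prodrXr; congr (_ ^+ _).
  rewrite /r_ -sum1_card big_mkcond /= [RHS]big_mkcond /=.
  by apply: eq_bigr => j _; rewrite inE; case: (j \in S); case: odd.
- move=> [eta o] /andP [/= hD ho]; rewrite /act /= invmx1.
  have ep : forall j, psi S 1%:M eta j = if j \in S then eta j else 1.
    move=> j; rewrite /psi.
    under eq_bigr => k kS do rewrite mxE -[X in eta k ^ X]mulr1.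
    by rewrite prod_delta expr1z.
  congr (_, _).
    apply/ffunP => j; rewrite !ffunE ep; case: ifP => jS; rewrite ?jS //.
    by rewrite (DS_off hD) ?jS.
  by rewrite big1 ?mul1r // => j jS; rewrite ep (negPf jS).
- move=> g h [eta o] hg hh /andP [/= hD ho].
  have [ug og] := WS_props fC hg; have [uh oh] := WS_props fC hh.
  rewrite /act /= invmx_mul //.
  have pm := fun j => psi_mul (invmx h) j (DS_unit hD) (offS_inv ug og).
  congr (_, _).
    apply/ffunP => j; rewrite !ffunE; case: ifP => jS; rewrite ?jS //.
    by rewrite pm jS mulr1.
  rewrite mulrA; congr (_ * _).
  rewrite -big_split /=; apply: eq_bigr => j jS.
  by rewrite pm (negPf jS).
Qed.
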